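(* Let $G$ be a vertex-color-avoiding connected graph and let $v$ be a cut-vertex of $G$ (a vertex whose removal disconnects $G$). Then all but one of the connected components of $G-v$ consist only of vertices having the same color as $v$.
   Context: Vertex-colorings are arbitrary (not necessarily proper). Two vertices $u,w$ are vertex-$c$-avoiding connected (for a color $c$) if there is a $u$-$w$ path and either at least one of $u,w$ has color $c$ or some $u$-$w$ path contains no vertex of color $c$. A graph is vertex-color-avoiding connected if any two vertices are vertex-$c$-avoiding connected for every color $c$. *)

(* Defs.v *)
From mathcomp Require Import all_boot.
Set Implicit Arguments. Unset Strict Implicit. Unset Printing Implicit Defensive.

Definition simple_graph (T : finType) (e : rel T) : Prop :=
  symmetric e /\ irreflexive e.

Definition avoid_rel (T : finType) (C : eqType) (e : rel T) (col : T -> C) (k : C) : rel T :=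
  [rel x y | [&& e x y, col x != k & col y != k]].

Definition vc_avoiding_connected (T : finType) (C : eqType) (e : rel T)
    (col : T -> C) (k : C) (u w : T) : Prop :=
  connect e u w /\
  (col u = k \/ col w = k \/ connect (avoid_rel e col k) u w).

Definition vertex_color_avoiding_connected (T : finType) (C : eqType)
    (e : rel T) (col : T -> C) : Prop :=
  forall (k : C) (u w : T), vc_avoiding_connected e col k u w.

Definition del_rel (T : finType) (e : rel T) (v : T) : rel T :=
  [rel x y | [&& e x y, x != v & y != v]].

Definition cut_vertex (T : finType) (e : rel T) (v : T) : Prop :=
  exists x y, [/\ x != v, y != v & ~~ connect (del_rel e v) x y].

(* Main.v *)
Require Import Defs.
From mathcomp Require Import all_boot.

Lemma avoid_del (T : finType) (C : eqType) (e : rel T) (col : T -> C) (v : T) a b :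
  connect (avoid_rel e col (col v)) a b -> connect (del_rel e v) a b.
Proof.
apply: connect_sub => x y /=; case/and3P => exy cx cy.
apply: connect1; rewrite /del_rel /= exy /=.
apply/andP; split; apply/eqP => E; [by rewrite E eqxx in cx | by rewrite E eqxx in cy].
Qed.

Theorem lemma3p12 (T : finType) (C : eqType) (e : rel T) (col : T -> C) (v : T) :
  simple_graph e ->
  vertex_color_avoiding_connected e col ->
  cut_vertex e v ->
  exists x0 : T, x0 != v /\
    forall y : T, y != v -> ~~ connect (del_rel e v) x0 y -> col y = col v.
Proof.
move=> _ Hvc [x [y [xv yv _]]].
case: (pickP [pred z | (z != v) && (col z != col v)]) => [y1 /andP [y1v cy1] | H].
- exists y1; split => // z zv nc.
  apply/eqP; apply/negPn/negP => cz.
  have [_ [E|[E|Hc]]] := Hvc (col v) y1 z.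
  + by rewrite E eqxx in cy1.
  + by rewrite E eqxx in cz.
  + by rewrite (@avoid_del T C e col v y1 z Hc) in nc.
- exists x; split => // z zv _.
  have := H z; rewrite /= zv /= => /negbFE /eqP; done.
Qed.
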